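(* Let $A_1,A_2\in\mathcal{C}^{\mathrm{geo}}$ and let $B=A_1\cap A_2$ be a common induced substructure of $A_1$ and $A_2$ such that $B\le A_1$. Let $D$ be the geometric amalgam of $A_1$ and $A_2$ over $B$. Then $D\in\mathcal{C}^{\mathrm{geo}}$.
   Context: Fix a natural number $n$ and a symmetric irreflexive $n$-ary relation symbol $S$; all substructures are induced substructures. For an $\{S\}$-structure $A$, a set $K\subseteq A$ with $|K|\ge n$ is a clique if every $n$-element subset of $K$ (as a tuple of distinct elements in any order) lies in $S^A$; it is a maximal clique if no clique of $A$ properly contains it. $\mathcal{M}(A)$ denotes the set of maximal cliques of $A$. For a finite set $X$ put $|X|_*=\max\{0,|X|-(n-1)\}$. For a finite $\{S\}$-structure $A$ put $s(A)=\sum_{K\in\mathcal{M}(A)}|K|_*$ and $\delta_s(A)=|A|-s(A)$. For finite $B\subseteq A$, $\delta_s(A/B)=\delta_s(A)-\delta_s(B)$. Write $B\le A$ if $\delta_s(X/B)\ge 0$ for every finite $X$ with $B\subseteq X\subseteq A$. An $\{S\}$-structure $A$ is geometric if whenever $X\subseteq A$ with $|X|\ge n$ and $\delta_s(X)<n$, there is a unique $K\in\mathcal{M}(A)$ with $X\subseteq K$. $\mathcal{C}^{\mathrm{geo}}$ is the class of finite geometric $\{S\}$-structures. For $A_1,A_2\in\mathcal{C}^{\mathrm{geo}}$ with $B=A_1\cap A_2$ a common induced substructure, the geometric amalgam of $A_1$ and $A_2$ over $B$ is the unique $\{S\}$-structure $D$ with universe $A_1\cup A_2$ whose set of maximal cliques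 is $M\cup M_1\cup M_2$, where $M=\{K_1\cup K_2: K_1\in\mathcal{M}(A_1),K_2\in\mathcal{M}(A_2),|K_1\cap K_2|\ge n-1\}$, $M_1=\{K\in\mathcal{M}(A_1):|K\cap L|<n-1\text{ for all }L\in\mathcal{M}(A_2)\}$, and $M_2=\{K\in\mathcal{M}(A_2):|K\cap L|<n-1\text{ for all }L\in\mathcal{M}(A_1)\}$ (i.e. $S^D$ is the set of $n$-tuples of distinct elements whose underlying set is contained in one of these sets). *)

(* Defs.v *)
From HB Require Import structures.
From mathcomp Require Import all_boot all_order all_algebra.
Set Implicit Arguments. Unset Strict Implicit. Unset Printing Implicit Defensive.
Import Order.TTheory GRing.Theory Num.Theory.

(* All structures live inside an ambient finite type T.  A finite
   {S}-structure is a universe A : {set T} together with the interpretation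
   S : pred (n.-tuple T) of the n-ary relation symbol.  Induced substructures
   on X \subset A are (X, S) (the relation is just restricted). *)

Section Geo.
Variables (n : nat) (T : finType).

Definition is_structure (A : {set T}) (S : pred (n.-tuple T)) : Prop :=
  [/\ forall t, S t -> all (fun x => x \in A) t,
      forall t t' : n.-tuple T, perm_eq t t' -> S t = S t'
    & forall t, S t -> uniq t].

Definition clique (S : pred (n.-tuple T)) (X K : {set T}) : bool :=
  [&& K \subset X, n <= #|K| &
      [forall t : n.-tuple T, (uniq t && all (fun x => x \in K) t) ==> S t]].

Definition maxclique (S : pred (n.-tuple T)) (X K : {set T}) : bool :=
  clique S X K && ~~ [exists K' : {set T}, clique S X K' && (K \proper K')].

(* |K|_* = max(0, |K| - (n-1)) *)
Definition star (K : {set T}) : nat := (#|K|.+1 - n)%N.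

Definition s_fun (S : pred (n.-tuple T)) (X : {set T}) : nat :=
  (\sum_(K : {set T} | maxclique S X K) star K)%N.

Definition delta (S : pred (n.-tuple T)) (X : {set T}) : int :=
  (#|X|%:Z - (s_fun S X)%:Z)%R.

Definition le_s (S : pred (n.-tuple T)) (B A : {set T}) : Prop :=
  forall X : {set T}, B \subset X -> X \subset A ->
    (0 <= delta S X - delta S B)%R.

Definition geometric (S : pred (n.-tuple T)) (A : {set T}) : Prop :=
  forall X : {set T}, X \subset A -> n <= #|X| -> (delta S X < n%:Z)%R ->
    exists! K : {set T}, maxclique S A K /\ X \subset K.

Definition amalgM (A1 : {set T}) (S1 : pred (n.-tuple T))
    (A2 : {set T}) (S2 : pred (n.-tuple T)) (K : {set T}) : bool :=
  [exists K1 : {set T}, exists K2 : {set T},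
     [&& maxclique S1 A1 K1, maxclique S2 A2 K2,
         n.-1 <= #|K1 :&: K2| & K == K1 :|: K2]].

Definition amalgM1 (A1 : {set T}) (S1 : pred (n.-tuple T))
    (A2 : {set T}) (S2 : pred (n.-tuple T)) (K : {set T}) : bool :=
  maxclique S1 A1 K &&
  [forall L : {set T}, maxclique S2 A2 L ==> (#|K :&: L| < n.-1)].

Definition amalgM2 (A1 : {set T}) (S1 : pred (n.-tuple T))
    (A2 : {set T}) (S2 : pred (n.-tuple T)) (K : {set T}) : bool :=
  maxclique S2 A2 K &&
  [forall L : {set T}, maxclique S1 A1 L ==> (#|K :&: L| < n.-1)].

(* relation S^D of the geometric amalgam D (universe A1 :|: A2) *)
Definition amalgam (A1 : {set T}) (S1 : pred (n.-tuple T))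
    (A2 : {set T}) (S2 : pred (n.-tuple T)) : pred (n.-tuple T) :=
  fun t => uniq t &&
    [exists K : {set T},
       [|| amalgM A1 S1 A2 S2 K, amalgM1 A1 S1 A2 S2 K | amalgM2 A1 S1 A2 S2 K]
       && all (fun x => x \in K) t].

End Geo.

(* Main.v *)
Require Import Defs.
From HB Require Import structures.
From mathcomp Require Import all_boot all_order all_algebra.
From mathcomp Require Import zify.
Set Implicit Arguments. Unset Strict Implicit. Unset Printing Implicit Defensive.

Section Gen.
Variables (n : nat) (T : finType).
Implicit Types (S : pred (n.-tuple T)) (A X Y K L Z : {set T}) (F : {set {set T}}).

Definition clok S K :=
  [forall t : n.-tuple T, (uniq t && all (fun x => x \in K) t) ==> S t].

Lemma cliqueE S X K : clique S X K = [&& K \subset X, n <= #|K| & clok S K].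
Proof. by []. Qed.

Lemma clok_sub S K K' : K' \subset K -> clok S K -> clok S K'.
Proof.
move=> sub /forallP H; apply/forallP => t; apply/implyP => /andP[u a].
apply: (implyP (H t)); rewrite u /=; apply/allP => x xt.
exact: (subsetP sub _ ((allP a) x xt)).
Qed.

Lemma exists_sub_card A k : k <= #|A| -> exists2 B : {set T}, B \subset A & #|B| = k.
Proof.
move=> le; exists [set x in take k (enum A)].
  apply/subsetP => x; rewrite inE => /mem_take; by rewrite mem_enum.
rewrite cardsE (card_uniqP _) ?take_uniq ?enum_uniq //; by rewrite size_takel // -cardE.
Qed.

Lemma tuple_of_set Y : #|Y| = n ->
  exists t : n.-tuple T, uniq t /\ (forall x, (x \in t) = (x \in Y)).
Proof.
move=> c; have sz : size (enum Y) == n by rewrite -cardE c.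
exists (Tuple sz); split; first exact: enum_uniq.
by move=> x; rewrite mem_enum.
Qed.

Lemma clok_tuple S K Y : clok S K -> Y \subset K -> #|Y| = n ->
  exists t : n.-tuple T, S t /\ (forall x, (x \in t) = (x \in Y)).
Proof.
move=> /forallP H sYK cY; have [t [ut mt]] := tuple_of_set cY.
exists t; split => //; apply: (implyP (H t)); rewrite ut /=.
by apply/allP => x; rewrite mt => /(subsetP sYK).
Qed.

Lemma clok_of_tuples S K :
  (forall t : n.-tuple T, uniq t -> (forall x, x \in t -> x \in K) -> S t) -> clok S K.
Proof.
move=> H; apply/forallP => t; apply/implyP => /andP[u /allP a]; exact: H.
Qed.

Lemma maxclique_exists S X K : clique S X K -> exists2 K', maxclique S X K' & K \subset K'.
Proof.
move=> cK.
pose P := fun K' => clique S X K' && (K \subset K').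
have PK : P K by rewrite /P cK subxx.
case: (@arg_maxnP _ K P (fun K' => #|K'|) PK) => K' /andP[cK' sK'] Hmax.
exists K' => //; rewrite /maxclique cK' /=; apply/negP => /existsP[K'' /andP[c'' pr]].
have := Hmax K''; rewrite /P c'' (subset_trans sK' (proper_sub pr)) => /(_ isT) /= le.
by move: (proper_card pr); rewrite ltnNge le.
Qed.

Lemma maxclique_clique S X K : maxclique S X K -> clique S X K.
Proof. by case/andP. Qed.

Lemma clique_sub S A Y K : Y \subset A ->
  clique S Y K = (K \subset Y) && clique S A K.
Proof.
move=> sYA; rewrite !cliqueE; case sKY: (K \subset Y) => //=.
by rewrite (subset_trans sKY sYA).
Qed.

Lemma clique_in_max S A Y K : Y \subset A ->
  clique S Y K = [&& K \subset Y, n <= #|K| &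
                   [exists L in [set L | maxclique S A L], K \subset L]].
Proof.
move=> sYA; rewrite (clique_sub _ _ sYA); case sKY: (K \subset Y) => //=.
apply/idP/idP.
  move=> cK; have [L mL sKL] := maxclique_exists cK.
  move: cK; rewrite cliqueE => /and3P[_ -> _] /=.
  by apply/exists_inP; exists L; rewrite ?inE.
case/andP => nK /exists_inP[L]; rewrite inE => /maxclique_clique.
rewrite cliqueE => /and3P[sLA _ okL] sKL.
by rewrite cliqueE (subset_trans sKL sLA) nK (clok_sub sKL okL).
Qed.

Lemma sfun_clique S X : clique S X X -> s_fun S X = star n X.
Proof.
move=> cX; rewrite /s_fun (eq_bigl (pred1 X)) ?big_pred1_eq // => K /=.
apply/idP/eqP => [/andP[cK nex]| ->].
  move: cK; rewrite cliqueE => /and3P[sKX _ _].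
  case: (eqVneq K X) => // neq; exfalso; apply: (negP nex); apply/existsP; exists X.
  by rewrite cX properEneq neq sKX.
rewrite /maxclique cX /=; apply/negP => /existsP[K' /andP[cK' pr]].
move: cK'; rewrite cliqueE => /and3P[sK'X _ _].
by move: pr; rewrite properE sK'X andbF.
Qed.

Lemma delta_ltn S X : (delta S X < n%:Z)%R = (#|X| < n + s_fun S X).
Proof. rewrite /delta; apply/idP/idP => H; lia. Qed.

Lemma delta_geq S X : (0 <= delta S X)%R = (s_fun S X <= #|X|).
Proof. rewrite /delta; apply/idP/idP => H; lia. Qed.

End Gen.


Section GenF.
Variables (n : nat) (T : finType).
Hypothesis n_gt0 : 0 < n.
Implicit Types (S : pred (n.-tuple T)) (A X Y K L Z : {set T}) (F : {set {set T}}).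

Definition Fint F := forall L L', L \in F -> L' \in F -> L != L' -> #|L :&: L'| < n.-1.

Definition Fcl S Y F := forall K,
  clique S Y K = [&& K \subset Y, n <= #|K| & [exists L in F, K \subset L]].

Lemma maxcliqueF S Y F : Fint F -> Fcl S Y F ->
  forall K, maxclique S Y K = [exists L in F, (n <= #|L :&: Y|) && (K == L :&: Y)].
Proof.
move=> Fi Fc K; rewrite /maxclique Fc; apply/idP/idP.
- case/andP => /and3P[sKY nK /exists_inP[L LF sKL]] nex.
  apply/exists_inP; exists L => //.
  have sKLY : K \subset L :&: Y by rewrite subsetI sKL sKY.
  case: (eqVneq K (L :&: Y)) => [e|neq]; first by rewrite -e nK.
  exfalso; apply: (negP nex); apply/existsP; exists (L :&: Y).
  apply/andP; split; last by rewrite properEneq neq sKLY.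
  rewrite Fc subsetIr (leq_trans nK (subset_leq_card sKLY)) /=.
  by apply/exists_inP; exists L => //; exact: subsetIl.
- case/exists_inP => L LF /andP[nL /eqP ->].
  apply/andP; split.
    apply/and3P; split; [exact: subsetIr | done | ].
    by apply/exists_inP; exists L => //; exact: subsetIl.
  apply/existsP => -[K' /andP[]]; rewrite Fc => /and3P[sK'Y nK' /exists_inP[L' L'F sK'L']] pr.
  have sub : L :&: Y \subset L :&: L'.
    by rewrite subsetI subsetIl (subset_trans (proper_sub pr) sK'L').
  case: (eqVneq L L') => [eqL|neL].
    subst L'; move: pr; rewrite properE => /andP[_].
    by rewrite subsetI sK'L' sK'Y.
  have := Fi _ _ LF L'F neL; have := subset_leq_card sub; lia.
Qed.

Lemma sfunF S Y F : Fint F -> Fcl S Y F ->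
  s_fun S Y = \sum_(L in F) star n (L :&: Y).
Proof.
move=> Fi Fc.
rewrite /s_fun (eq_bigl (fun K => K \in [set L :&: Y | L in [set L in F | n <= #|L :&: Y|]])); last first.
  move=> K; rewrite (maxcliqueF Fi Fc) /=; apply/exists_inP/imsetP => [[L LF /andP[nL /eqP ->]]|[L]].
    by exists L; rewrite // inE LF.
  by rewrite inE => /andP[LF nL] ->; exists L => //; rewrite nL eqxx.
rewrite big_imset /=; last first.
  move=> L L'; rewrite !inE => /andP[LF nL] /andP[L'F nL'] eq.
  apply/eqP; apply: contraLR nL => neq; have := Fi _ _ LF L'F neq.
  have : L :&: Y \subset L :&: L' by rewrite subsetI subsetIl eq subsetIl.
  move/subset_leq_card; lia.
rewrite [RHS](bigID (fun L => n <= #|L :&: Y|)) /= [X in _ + X]big1 ?addn0.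
  by apply: eq_bigl => L; rewrite inE.
move=> L /andP[_]; rewrite -ltnNge /star => lt; apply/eqP; rewrite subn_eq0; exact: lt.
Qed.

Definition MC S A := [set K | maxclique S A K].

Lemma Fcl_MC S A Y : Y \subset A -> Fcl S Y (MC S A).
Proof. by move=> sYA K; rewrite (clique_in_max _ _ sYA). Qed.

Lemma uniq_n S A Y : geometric S A -> Y \subset A -> #|Y| = n -> clok S Y ->
  exists! M, maxclique S A M /\ Y \subset M.
Proof.
move=> geo sYA cY okY; apply: geo => //; first by rewrite cY.
have cl : clique S Y Y by rewrite cliqueE subxx cY leqnn okY.
rewrite delta_ltn (sfun_clique cl) /star cY; lia.
Qed.

Lemma maxclique_sub S A K : maxclique S A K -> K \subset A.
Proof. by move/maxclique_clique; rewrite cliqueE => /and3P[]. Qed.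

Lemma maxclique_card S A K : maxclique S A K -> n <= #|K|.
Proof. by move/maxclique_clique; rewrite cliqueE => /and3P[]. Qed.

Lemma maxclique_ok S A K : maxclique S A K -> clok S K.
Proof. by move/maxclique_clique; rewrite cliqueE => /and3P[]. Qed.

Lemma maxclique_notsub S A K L : maxclique S A K -> maxclique S A L -> K != L ->
  exists2 x, x \in K & x \notin L.
Proof.
move=> mK mL neq; apply/subsetPn/negP => sKL.
move: mK => /andP[_ /negP]; apply; apply/existsP; exists L.
by rewrite (maxclique_clique mL) properEneq neq sKL.
Qed.

Lemma maxclique_big S X Y : Y \subset X -> #|Y| = n -> clok S Y ->
  #|X| = n.+1 -> ~~ clok S X -> maxclique S X Y.
Proof.
move=> sYX cY okY cX nokX; rewrite /maxclique cliqueE sYX cY leqnn okY /=.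
apply/negP => /existsP[K' /andP[]]; rewrite cliqueE => /and3P[sK'X _ okK'] pr.
have eK : K' = X.
  apply/eqP; rewrite eqEcard sK'X cX; move: (proper_card pr); rewrite cY //.
by move: okK'; rewrite eK (negbTE nokX).
Qed.

Lemma geo_int S A : geometric S A -> Fint (MC S A).
Proof.
move=> geo K L; rewrite !inE => mK mL neq; rewrite ltnNge; apply/negP => le.
have [x xK xL] := maxclique_notsub mK mL neq.
have neq' : L != K by rewrite eq_sym.
have [y yL yK] := maxclique_notsub mL mK neq'.
have [Z sZ cZ] := exists_sub_card le.
have sZK : Z \subset K by apply: (subset_trans sZ); exact: subsetIl.
have sZL : Z \subset L by apply: (subset_trans sZ); exact: subsetIr.
have xZ : x \notin Z by apply: contra xL; exact: (subsetP sZL).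
have yZ : y \notin Z by apply: contra yK; exact: (subsetP sZK).
have xy : x != y by apply: contraNneq xL => ->.
pose Y1 := x |: Z; pose Y2 := y |: Z; pose X' := y |: Y1.
have cY1 : #|Y1| = n by rewrite cardsU1 xZ cZ add1n prednK.
have cY2 : #|Y2| = n by rewrite cardsU1 yZ cZ add1n prednK.
have yY1 : y \notin Y1 by rewrite !inE negb_or eq_sym xy yZ.
have cX' : #|X'| = n.+1 by rewrite cardsU1 yY1 cY1.
have sY1K : Y1 \subset K by rewrite subUset sub1set xK sZK.
have sY2L : Y2 \subset L by rewrite subUset sub1set yL sZL.
have sY1X : Y1 \subset X' by exact: subsetUr.
have sY2X : Y2 \subset X'.
  by rewrite subUset sub1set !inE eqxx /= (subset_trans (subsetUr [set x] Z) sY1X).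
have sX'A : X' \subset A.
  rewrite subUset sub1set (subsetP (maxclique_sub mL)) //.
  exact: (subset_trans sY1K (maxclique_sub mK)).
have okY1 : clok S Y1 := clok_sub sY1K (maxclique_ok mK).
have okY2 : clok S Y2 := clok_sub sY2L (maxclique_ok mL).
have [M0 [_ U]] := uniq_n geo (subset_trans sY1X sX'A) cY1 okY1.
case okX: (clok S X').
  have cX : clique S A X' by rewrite cliqueE sX'A cX' leqnSn okX.
  have [M mM sXM] := maxclique_exists cX.
  have e1 := U K (conj mK sY1K).
  have e2 := U M (conj mM (subset_trans sY1X sXM)).
  move: yK; rewrite -e1 e2 (subsetP sXM) //.
  by rewrite !inE eqxx.
have m1 : maxclique S X' Y1 by apply: maxclique_big => //; rewrite okX.
have m2 : maxclique S X' Y2 by apply: maxclique_big => //; rewrite okX.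
have n12 : Y2 != Y1.
  by apply/negP => /eqP e; move: yY1; rewrite -e !inE eqxx.
have s2 : 2 <= s_fun S X'.
  rewrite /s_fun (bigD1 Y1) //= (bigD1 Y2) /=; last by rewrite m2 n12.
  rewrite /star cY1 cY2 subSnn addnA; exact: leq_addr.
have [M [[mM sXM] _]] : exists! M, maxclique S A M /\ X' \subset M.
  by apply: geo => //; [rewrite cX' | rewrite delta_ltn cX' -addn1 ltn_add2l].
by move: okX; rewrite (clok_sub sXM (maxclique_ok mM)).
Qed.

Lemma sfun_geo S A Y : geometric S A -> Y \subset A ->
  s_fun S Y = \sum_(L in MC S A) star n (L :&: Y).
Proof. move=> geo sYA; apply: sfunF; [exact: geo_int | exact: Fcl_MC]. Qed.

End GenF.


Definition FF n (T : finType) (A1 : {set T}) (S1 : pred (n.-tuple T))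
  (A2 : {set T}) (S2 : pred (n.-tuple T)) : {set {set T}} :=
  [set K | [|| amalgM A1 S1 A2 S2 K, amalgM1 A1 S1 A2 S2 K | amalgM2 A1 S1 A2 S2 K]].

Lemma FF_swap n (T : finType) A1 (S1 : pred (n.-tuple T)) A2 S2 :
  FF A2 S2 A1 S1 = FF A1 S1 A2 S2.
Proof.
apply/setP => K; rewrite !inE.
have -> : amalgM A2 S2 A1 S1 K = amalgM A1 S1 A2 S2 K.
  apply/existsP/existsP => -[Ka /existsP[Kb /and4P[ma mb le /eqP e]]];
    exists Kb; apply/existsP; exists Ka; rewrite ma mb setIC le /= e setUC //.
by rewrite /amalgM1 /amalgM2; case: (amalgM _ _ _ _ _) => //=; rewrite orbC.
Qed.

Section Amal1.
Variables (n : nat) (T : finType).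
Hypothesis n_gt0 : 0 < n.
Variables (Aa Ab : {set T}) (Sa Sb : pred (n.-tuple T)).
Hypothesis geoa : geometric Sa Aa.
Hypothesis geob : geometric Sb Ab.
Hypothesis agree : forall t : n.-tuple T, all (fun x => x \in Aa :&: Ab) t -> Sa t = Sb t.
Implicit Types (K Ka Kb : {set T}).

Lemma clok_agree K : K \subset Aa :&: Ab -> clok Sa K = clok Sb K.
Proof.
move=> sK; apply: eq_forallb => t; case u: (uniq t) => //=.
case a: (all _ t) => //=; rewrite agree //.
by apply/allP => x xt; apply: (subsetP sK); exact: (allP a).
Qed.

Lemma matched_sub Ka Kb : maxclique Sa Aa Ka -> maxclique Sb Ab Kb ->
  n.-1 <= #|Ka :&: Kb| -> Ka :&: Ab \subset Kb.
Proof.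
move=> ma mb le.
have sKaAa := maxclique_sub ma; have sKbAb := maxclique_sub mb.
have sI : Ka :&: Kb \subset Ka :&: Ab by rewrite setIS.
case: (leqP n #|Ka :&: Ab|) => h.
  have okb : clok Sb (Ka :&: Ab).
    rewrite -clok_agree; first exact: (clok_sub (subsetIl _ _) (maxclique_ok ma)).
    by rewrite setSI.
  have cl : clique Sb Ab (Ka :&: Ab) by rewrite cliqueE subsetIr h okb.
  have [Kb' mb' sK'] := maxclique_exists cl.
  case: (eqVneq Kb' Kb) => [<- //| neq].
  have := geo_int n_gt0 geob; move/(_ Kb' Kb); rewrite !inE => /(_ mb' mb neq).
  have : Ka :&: Kb \subset Kb' :&: Kb.
    by rewrite subsetI subsetIr (subset_trans sI sK').
  move/subset_leq_card; lia.
have e : Ka :&: Kb = Ka :&: Ab.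
  by apply/eqP; rewrite eqEcard sI /=; move: (subset_leq_card sI); lia.
by rewrite -e subsetIr.
Qed.

Lemma matched_card Ka Kb : maxclique Sa Aa Ka -> maxclique Sb Ab Kb ->
  n.-1 <= #|Ka :&: Kb| -> n.-1 <= #|Ka :&: Ab|.
Proof.
move=> ma mb le; apply: (leq_trans le); apply: subset_leq_card.
by rewrite setIS // (maxclique_sub mb).
Qed.

Lemma matched_uniq Ka Kb (Kb' : {set T}) : maxclique Sa Aa Ka -> maxclique Sb Ab Kb ->
  maxclique Sb Ab Kb' ->
  n.-1 <= #|Ka :&: Kb| -> n.-1 <= #|Ka :&: Kb'| -> Kb = Kb'.
Proof.
move=> ma mb mb' le le'.
have s1 := matched_sub ma mb le; have s2 := matched_sub ma mb' le'.
case: (eqVneq Kb Kb') => // neq.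
have := geo_int n_gt0 geob; move/(_ Kb Kb'); rewrite !inE => /(_ mb mb' neq).
have : Ka :&: Kb \subset Kb :&: Kb'.
  rewrite subsetI subsetIr; apply: (subset_trans _ s2).
  by rewrite setIS // (maxclique_sub mb).
move/subset_leq_card; lia.
Qed.

End Amal1.


Section Amal2.
Variables (n : nat) (T : finType).
Hypothesis n_gt0 : 0 < n.
Variables (Aa Ab : {set T}) (Sa Sb : pred (n.-tuple T)).
Hypothesis geoa : geometric Sa Aa.
Hypothesis geob : geometric Sb Ab.
Hypothesis agree : forall t : n.-tuple T, all (fun x => x \in Aa :&: Ab) t -> Sa t = Sb t.
Implicit Types (K Ka Kb L : {set T}).

Lemma agree' : forall t : n.-tuple T, all (fun x => x \in Ab :&: Aa) t -> Sb t = Sa t.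
Proof. by move=> t a; rewrite agree // setIC. Qed.

Lemma msab Ka Kb : maxclique Sa Aa Ka -> maxclique Sb Ab Kb ->
  n.-1 <= #|Ka :&: Kb| -> Ka :&: Ab \subset Kb.
Proof. move=> ma mb le; exact: (matched_sub n_gt0 geob agree ma mb le). Qed.

Lemma msba Ka Kb : maxclique Sa Aa Ka -> maxclique Sb Ab Kb ->
  n.-1 <= #|Ka :&: Kb| -> Kb :&: Aa \subset Ka.
Proof. by move=> ma mb le; apply: (matched_sub n_gt0 geoa agree' mb ma); rewrite setIC. Qed.

Lemma coverA K : K \subset Aa -> n <= #|K| ->
  [exists L in FF Aa Sa Ab Sb, K \subset L] = [exists L in MC Sa Aa, K \subset L].
Proof.
move=> sKA nK; apply/exists_inP/exists_inP.
- move=> [L]; rewrite inE => /or3P[/existsP[Ka /existsP[Kb /and4P[ma mb le /eqP ->]]]|/andP[ma _]|/andP[mb _]] sKL.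
  + exists Ka; first by rewrite inE.
    apply/subsetP => x xK; move: (subsetP sKL x xK); rewrite inE => /orP[//|xKb].
    by apply: (subsetP (msba ma mb le)); rewrite inE xKb (subsetP sKA).
  + by exists L; rewrite ?inE.
  + have sKB : K \subset Aa :&: Ab by rewrite subsetI sKA (subset_trans sKL (maxclique_sub mb)).
    have okK : clok Sa K by rewrite (clok_agree agree sKB) (clok_sub sKL (maxclique_ok mb)).
    have cK : clique Sa Aa K by rewrite cliqueE sKA nK okK.
    by have [L' mL' sKL'] := maxclique_exists cK; exists L'; rewrite ?inE.
- move=> [Ka]; rewrite inE => ma sKKa.
  case: (boolP [exists Kb, maxclique Sb Ab Kb && (n.-1 <= #|Ka :&: Kb|)]).
    case/existsP => Kb /andP[mb le]; exists (Ka :|: Kb).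
      by rewrite inE; apply/or3P; apply: Or31; apply/existsP; exists Ka; apply/existsP; exists Kb; rewrite ma mb le eqxx.
    by rewrite (subset_trans sKKa) // subsetUl.
  move=> nex; exists Ka => //; rewrite inE; apply/or3P; apply: Or32; rewrite /amalgM1 ma /=.
  apply/forallP => Kb; apply/implyP => mb; rewrite ltnNge; apply/negP => le.
  by move/negP: nex; apply; apply/existsP; exists Kb; rewrite mb le.
Qed.

End Amal2.


Lemma sfun_eq n (T : finType) (S S' : pred (n.-tuple T)) Y :
  (forall K, clique S Y K = clique S' Y K) -> s_fun S Y = s_fun S' Y.
Proof.
move=> H; apply: eq_bigl => K; rewrite /maxclique H; congr (_ && ~~ _).
by apply: eq_existsb => K'; rewrite H.
Qed.

Lemma le_s_nat n (T : finType) (S : pred (n.-tuple T)) (B A Y : {set T}) :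
  le_s S B A -> B \subset Y -> Y \subset A -> s_fun S Y + #|B| <= #|Y| + s_fun S B.
Proof. move=> H sB sY; have := H Y sB sY; rewrite /delta => h; lia. Qed.

Lemma card_disjU (T : finType) (U V : {set T}) : U :&: V = set0 -> #|U :|: V| = #|U| + #|V|.
Proof. by move=> e; rewrite -cardsUI e cards0 addn0. Qed.

Lemma sum2 (T : finType) (FS : {set {set T}}) a b (f g : {set T} -> nat) :
  a \in FS -> b \in FS -> a != b -> (forall L, L \in FS -> g L <= f L) ->
  \sum_(L in FS) g L + (f a - g a) + (f b - g b) <= \sum_(L in FS) f L.
Proof.
move=> aF bF ab H.
have bFa : (b \in FS) && (b != a) by rewrite bF eq_sym.
have e : \sum_(L in FS) f L = \sum_(L in FS) g L + \sum_(L in FS) (f L - g L).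
  rewrite -big_split; apply: eq_bigr => L LF /=; rewrite subnKC //; exact: H.
have d : (f a - g a) + (f b - g b) <= \sum_(L in FS) (f L - g L).
  rewrite (bigD1 a aF) (bigD1 b bFa) /= addnA; exact: leq_addr.
by rewrite e -addnA leq_add2l.
Qed.

Lemma star_add n a p : 0 < n -> n.-1 <= a -> (a + p).+1 - n - (a.+1 - n) = p.
Proof. move=> h1 h2; lia. Qed.

Lemma sum1 (T : finType) (FS : {set {set T}}) a (f g : {set T} -> nat) :
  a \in FS -> (forall L, L \in FS -> g L <= f L) ->
  \sum_(L in FS) g L + (f a - g a) <= \sum_(L in FS) f L.
Proof.
move=> aF H.
have e : \sum_(L in FS) f L = \sum_(L in FS) g L + \sum_(L in FS) (f L - g L).
  rewrite -big_split; apply: eq_bigr => L LF /=; rewrite subnKC //; exact: H.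
have d : (f a - g a) <= \sum_(L in FS) (f L - g L).
  rewrite (bigD1 a aF) /=; exact: leq_addr.
by rewrite e leq_add2l.
Qed.

Lemma arith_sub n x a b c : 0 < n -> x + c = a + b -> c <= a -> c <= b ->
  (x <= n.-1 \/ n.-1 <= c \/ x = a \/ x = b) ->
  x.+1 - n + (c.+1 - n) <= a.+1 - n + (b.+1 - n).
Proof. move=> h1 h2 h3 h4 [h5|[h5|[h5|h5]]]; lia. Qed.

Lemma arith_conv n p q a b : p + q = a + b -> q <= a -> q <= b ->
  a.+1 - n + (b.+1 - n) <= p.+1 - n + (q.+1 - n).
Proof. move=> h1 h2 h3; lia. Qed.

Lemma ar_ha y b x0 x1 sY sB s1 s0 : sY + b <= y + sB -> s1 + sB <= sY + s0 ->
  y + x0 = x1 + b -> x0 + s1 <= x1 + s0.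
Proof. move=> *; lia. Qed.
Lemma arA1 n x x0 x1 x2 s s0 s1 s2 : 0 < n -> x + x0 = x1 + x2 -> s + s0 <= s1 + s2 ->
  x0 < x2 -> s2 = 0 -> s0 = 0 -> n.-1 + s1 <= x1 -> n + s <= x.
Proof. move=> *; lia. Qed.
Lemma arA2 n x s s0 s1 s2 : s + s0 <= s1 + s2 -> s2 = 0 -> s1 = 0 -> n <= x -> n + s <= x.
Proof. move=> *; lia. Qed.
Lemma arB n x x0 x1 x2 s s0 s1 s2 : x + x0 = x1 + x2 -> s + s0 <= s1 + s2 ->
  x0 + s1 <= x1 + s0 -> n + s2 <= x2 -> n + s <= x.
Proof. move=> *; lia. Qed.
Lemma arC1 n x0 x1 : 0 < n -> n.-1 <= x0 -> x0 < x1 -> n <= x1.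
Proof. move=> *; lia. Qed.
Lemma arC n x x0 x1 x2 s s0 s1 s2 : x + x0 = x1 + x2 -> s + s0 <= s1 + s2 ->
  s2 + n.-1 = x2 -> s0 + n.-1 = x0 -> n + s1 <= x1 -> n + s <= x.
Proof. move=> *; lia. Qed.
Lemma arD1 n x x0 x1 x2 s s0 s1 s2 : 0 < n -> x + x0 = x1 + x2 -> s + s0 <= s1 + s2 ->
  s2 + n.-1 = x2 -> s0 = 0 -> x0 < n.-1 -> n.-1 + s1 <= x1 -> n + s <= x.
Proof. move=> *; lia. Qed.
Lemma arD2 n x x0 x1 x2 s s0 s1 s2 : 0 < n -> x + x0 = x1 + x2 -> s + s0 <= s1 + s2 ->
  s2 + n.-1 = x2 -> s0 = 0 -> x0 < x1 -> s1 = 0 -> n + s <= x.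
Proof. move=> *; lia. Qed.

Lemma arE n x s s' : n + s' <= x + 1 -> s + 1 <= s' -> n + s <= x.
Proof. move=> *; lia. Qed.

Section Main.
Variables (n : nat) (T : finType).
Hypothesis n_gt0 : 0 < n.
Variables (A1 A2 : {set T}) (S1 S2 : pred (n.-tuple T)).
Hypothesis geo1 : geometric S1 A1.
Hypothesis geo2 : geometric S2 A2.
Hypothesis agree : forall t : n.-tuple T, all (fun x => x \in A1 :&: A2) t -> S1 t = S2 t.
Hypothesis le1 : le_s S1 (A1 :&: A2) A1.
Implicit Types (K L Y X : {set T}).

Local Notation F := (FF A1 S1 A2 S2).
Local Notation R := (amalgam A1 S1 A2 S2).
Local Notation mc1 := (maxclique S1 A1).
Local Notation mc2 := (maxclique S2 A2).

Let agr' := agree' agree.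
Let ms12 := msab n_gt0 geo2 agree.
Let ms21 := msba n_gt0 geo1 agree.
Let int1 := geo_int n_gt0 geo1.
Let int2 := geo_int n_gt0 geo2.

Lemma mu12 (K1 K2 K2' : {set T}) : mc1 K1 -> mc2 K2 -> mc2 K2' ->
  n.-1 <= #|K1 :&: K2| -> n.-1 <= #|K1 :&: K2'| -> K2 = K2'.
Proof. move=> m1 m2 m2' le le'; exact: (matched_uniq n_gt0 geo2 agree m1 m2 m2' le le'). Qed.

Lemma mu21 (K1 K1' K2 : {set T}) : mc1 K1 -> mc1 K1' -> mc2 K2 ->
  n.-1 <= #|K1 :&: K2| -> n.-1 <= #|K1' :&: K2| -> K1 = K1'.
Proof.
move=> m1 m1' m2 le le'; apply: (matched_uniq n_gt0 geo1 agr' m2 m1 m1');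
  by rewrite setIC.
Qed.

Variant Fspec L : Prop :=
 | FM (K1 K2 : {set T}) of mc1 K1 & mc2 K2 & n.-1 <= #|K1 :&: K2| & L = K1 :|: K2
 | FM1 of mc1 L & (forall K2 : {set T}, mc2 K2 -> #|L :&: K2| < n.-1)
 | FM2 of mc2 L & (forall K1 : {set T}, mc1 K1 -> #|L :&: K1| < n.-1).

Lemma inFP L : L \in F -> Fspec L.
Proof.
rewrite inE => /or3P[/existsP[K1 /existsP[K2 /and4P[m1 m2 le /eqP ->]]]|/andP[m1 H]|/andP[m2 H]].
- exact: FM m1 m2 le _.
- by apply: FM1 => // K2 m2; move/forallP: H => /(_ K2); rewrite m2.
- by apply: FM2 => // K1 m1; move/forallP: H => /(_ K1); rewrite m1.
Qed.

Lemma F_sub L : L \in F -> L \subset A1 :|: A2.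
Proof.
case/inFP => [K1 K2 m1 m2 _ ->|m1 _|m2 _].
- by apply: setUSS; [exact: maxclique_sub m1|exact: maxclique_sub m2].
- exact: (subset_trans (maxclique_sub m1) (subsetUl _ _)).
- exact: (subset_trans (maxclique_sub m2) (subsetUr _ _)).
Qed.

Lemma F_card L : L \in F -> n <= #|L|.
Proof.
case/inFP => [K1 K2 m1 m2 _ ->|m1 _|m2 _]; last 2 first.
- exact: maxclique_card m1.
- exact: maxclique_card m2.
by apply: (leq_trans (maxclique_card m1)); apply: subset_leq_card; exact: subsetUl.
Qed.

Lemma BA1 (K1 K1' : {set T}) : mc1 K1 -> mc1 K1' -> K1 != K1' ->
  n.-1 <= #|K1 :&: A2| -> n.-1 <= #|K1' :&: A2| -> K1 :&: K1' \subset A2.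
Proof.
move=> m1 m1' neq c1 c1'.
have sK1 := maxclique_sub m1; have sK1' := maxclique_sub m1'.
have sPK1 : (K1 :&: K1') :\: A2 \subset K1 by apply/subsetP => x; rewrite !inE => /and3P[].
have sPK1' : (K1 :&: K1') :\: A2 \subset K1' by apply/subsetP => x; rewrite !inE => /and3P[].
have sB : A1 :&: A2 \subset (A1 :&: A2) :|: ((K1 :&: K1') :\: A2) by exact: subsetUl.
have sYA : (A1 :&: A2) :|: ((K1 :&: K1') :\: A2) \subset A1.
  by rewrite subUset subsetIl (subset_trans sPK1 sK1).
have H := le_s_nat le1 sB sYA.
have dBP : (A1 :&: A2) :&: ((K1 :&: K1') :\: A2) = set0.
  by apply/setP => x; rewrite !inE; case: (x \in A2); rewrite ?andbF.
have cY := card_disjU dBP.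
have key : forall K, mc1 K -> (K1 :&: K1') :\: A2 \subset K -> n.-1 <= #|K :&: A2| ->
    star n (K :&: ((A1 :&: A2) :|: ((K1 :&: K1') :\: A2))) - star n (K :&: (A1 :&: A2))
    = #|(K1 :&: K1') :\: A2|.
  move=> K mK sPK cK.
  rewrite /star setIUr (setIidPr sPK) card_disjU; last first.
    by apply/setP => x; rewrite !inE; case: (x \in A2); rewrite ?andbF.
  have : #|K :&: A2| <= #|K :&: (A1 :&: A2)|.
    apply: subset_leq_card; apply/subsetP => x; rewrite !inE => /andP[xK ->].
    by rewrite xK (subsetP (maxclique_sub mK)).
  by move=> le; apply: star_add => //; exact: leq_trans cK le.
have k1 := key _ m1 sPK1 c1; have k2 := key _ m1' sPK1' c1'.
have Hs := sum2 (f := fun L => star n (L :&: ((A1 :&: A2) :|: ((K1 :&: K1') :\: A2))))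
   (g := fun L => star n (L :&: (A1 :&: A2))) (FS := MC S1 A1) (a := K1) (b := K1').
rewrite !inE in Hs; have {Hs} Hs := Hs m1 m1' neq.
have mono : forall L, L \in MC S1 A1 -> star n (L :&: (A1 :&: A2)) <=
    star n (L :&: ((A1 :&: A2) :|: ((K1 :&: K1') :\: A2))).
  move=> L _; rewrite /star; apply: leq_sub2r; rewrite ltnS; apply: subset_leq_card.
  by rewrite setIS.
have {Hs} Hs := Hs mono; rewrite /= k1 k2 in Hs.
rewrite (sfun_geo n_gt0 geo1 sYA) (sfun_geo n_gt0 geo1 (subsetIl A1 A2)) in H.
have P0 : #|(K1 :&: K1') :\: A2| = 0.
  move: H Hs; rewrite cY.
  set sa := \sum_(L in MC S1 A1) star n (L :&: (A1 :&: A2)).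
  set sb := \sum_(L in MC S1 A1) star n (L :&: (A1 :&: A2 :|: K1 :&: K1' :\: A2)).
  move: sa sb (#|K1 :&: K1' :\: A2|) (#|A1 :&: A2|) => sa sb p q; lia.
apply/subsetP => x xK; apply/negPn/negP => nx.
move/eqP: P0; rewrite cards_eq0 => /eqP/setP/(_ x); rewrite !inE nx.
by move: xK; rewrite inE => ->.
Qed.


Lemma Fint_M (K1 K2 L' : {set T}) : mc1 K1 -> mc2 K2 -> n.-1 <= #|K1 :&: K2| ->
  L' \in F -> K1 :|: K2 != L' -> #|(K1 :|: K2) :&: L'| < n.-1.
Proof.
move=> m1 m2 le L'F neq.
case: (inFP L'F) => [K1' K2' m1' m2' le' eL'|m1' H1|m2' H2].
- subst L'.
  have nK1 : K1 != K1'.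
    apply: contra neq => /eqP e1; subst K1'; by rewrite (mu12 m1 m2 m2' le le').
  have nK2 : K2 != K2'.
    apply: contra nK1 => /eqP e2; subst K2'; apply/eqP; exact: (mu21 m1 m1' m2 le le').
  have sub1 := BA1 m1 m1' nK1 (matched_card m1 m2 le) (matched_card m1' m2' le').
  have s12 := ms12 m1 m2 le; have s12' := ms12 m1' m2' le'.
  have sub : (K1 :|: K2) :&: (K1' :|: K2') \subset K2 :&: K2'.
    apply/subsetP => x; rewrite !inE => /andP[/orP[xK1|xK2] /orP[xK1'|xK2']].
    + have xA2 : x \in A2 by apply: (subsetP sub1); rewrite inE xK1 xK1'.
      by rewrite (subsetP s12) ?inE ?xK1 ?xA2 // (subsetP s12') ?inE ?xK1' ?xA2.
    + have xA2 : x \in A2 by apply: (subsetP (maxclique_sub m2')).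
      by rewrite xK2' (subsetP s12) ?inE ?xK1 ?xA2.
    + have xA2 : x \in A2 by apply: (subsetP (maxclique_sub m2)).
      by rewrite xK2 (subsetP s12') ?inE ?xK1' ?xA2.
    + by rewrite xK2 xK2'.
  apply: leq_ltn_trans (subset_leq_card sub) _.
  by apply: int2 => //; rewrite inE.
- have nK1 : K1 != L'.
    apply/negP => /eqP e; move: (H1 K2 m2); rewrite -e ltnNge le //.
  have s21 := ms21 m1 m2 le.
  have sub : (K1 :|: K2) :&: L' \subset K1 :&: L'.
    apply/subsetP => x; rewrite !inE => /andP[/orP[xK1|xK2] xL]; rewrite xL ?xK1 //.
    by rewrite (subsetP s21) // inE xK2 (subsetP (maxclique_sub m1')).
  apply: leq_ltn_trans (subset_leq_card sub) _.
  by apply: int1 => //; rewrite inE.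
- have nK2 : K2 != L'.
    apply/negP => /eqP e; move: (H2 K1 m1); rewrite -e setIC ltnNge le //.
  have s12 := ms12 m1 m2 le.
  have sub : (K1 :|: K2) :&: L' \subset K2 :&: L'.
    apply/subsetP => x; rewrite !inE => /andP[/orP[xK1|xK2] xL]; rewrite xL ?xK2 //.
    by rewrite (subsetP s12) // inE xK1 (subsetP (maxclique_sub m2')).
  apply: leq_ltn_trans (subset_leq_card sub) _.
  by apply: int2 => //; rewrite inE.
Qed.

Lemma F_int : Fint n F.
Proof.
move=> L L' LF L'F neq.
case: (inFP LF) => [K1 K2 m1 m2 le eL|m1 H1|m2 H2].
- by subst L; apply: Fint_M.
- case: (inFP L'F) => [K1' K2' m1' m2' le' eL'|m1' _|m2' _].
  + by subst L'; rewrite setIC; apply: Fint_M; rewrite // eq_sym.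
  + by apply: int1; rewrite ?inE.
  + exact: H1 L' m2'.
- case: (inFP L'F) => [K1' K2' m1' m2' le' eL'|m1' _|m2' _].
  + by subst L'; rewrite setIC; apply: Fint_M; rewrite // eq_sym.
  + exact: H2 L' m1'.
  + by apply: int2; rewrite ?inE.
Qed.

Lemma Rtuple (t : n.-tuple T) : R t -> exists2 L, L \in F & (forall x, x \in t -> x \in L).
Proof.
rewrite /amalgam => /andP[_ /existsP[L /andP[LF /allP a]]].
by exists L; rewrite ?inE.
Qed.

Lemma okF K L : L \in F -> K \subset L -> clok R K.
Proof.
move=> LF sKL; apply: clok_of_tuples => t ut tK.
rewrite /amalgam ut /=; apply/existsP; exists L; move: LF; rewrite inE => -> /=.
by apply/allP => x xt; apply: (subsetP sKL); exact: tK.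
Qed.

Lemma F_cl Y : Y \subset A1 :|: A2 -> Fcl R Y F.
Proof.
move=> sY K; rewrite cliqueE; case sKY: (K \subset Y) => //=.
case nK: (n <= #|K|) => //=.
apply/idP/idP; last by case/exists_inP => L LF sKL; exact: okF LF sKL.
move=> ok; have [Y0 sY0 cY0] := exists_sub_card nK.
have [t0 [Rt0 mt0]] := clok_tuple ok sY0 cY0.
have [L LF tL] := Rtuple Rt0.
apply/exists_inP; exists L => //; apply/subsetP => p pK.
case: (boolP (p \in Y0)) => [pY0|npY0]; first by apply: tL; rewrite mt0.
have : n.-1 <= #|Y0| by rewrite cY0 leq_pred.
case/exists_sub_card => Z sZ cZ.
have pZ : p \notin Z by apply: contra npY0; exact: (subsetP sZ).
have cZ' : #|p |: Z| = n by rewrite cardsU1 pZ cZ add1n prednK.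
have sZK : p |: Z \subset K by rewrite subUset sub1set pK (subset_trans sZ sY0).
have [t1 [Rt1 mt1]] := clok_tuple ok sZK cZ'.
have [L' L'F tL'] := Rtuple Rt1.
have e : L = L'.
  case: (eqVneq L L') => // neq; have h2 := F_int LF L'F neq.
  have : Z \subset L :&: L'.
    apply/subsetP => x xZ; rewrite inE tL ?mt0 ?(subsetP sZ) //.
    by rewrite tL' // mt1 !inE xZ orbT.
  move/subset_leq_card; rewrite cZ => h1.
  by have := leq_ltn_trans h1 h2; rewrite ltnn.
by rewrite e; apply: tL'; rewrite mt1 !inE eqxx.
Qed.

Definition sig Y := \sum_(L in F) star n (L :&: Y).

Lemma sfun_R Y : Y \subset A1 :|: A2 -> s_fun R Y = sig Y.
Proof. move=> sY; rewrite /sig; exact: (sfunF n_gt0 F_int (F_cl sY)). Qed.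

Lemma cover1 K : K \subset A1 -> n <= #|K| ->
  [exists L in F, K \subset L] = [exists L in MC S1 A1, K \subset L].
Proof. move=> sK nK; exact: (coverA n_gt0 geo1 agree sK nK). Qed.

Lemma cover2 K : K \subset A2 -> n <= #|K| ->
  [exists L in F, K \subset L] = [exists L in MC S2 A2, K \subset L].
Proof. by move=> sK nK; rewrite -(coverA n_gt0 geo2 agr' sK nK) FF_swap. Qed.

Lemma clique_R1 Y K : Y \subset A1 -> clique R Y K = clique S1 Y K.
Proof.
move=> sY; rewrite (F_cl (subset_trans sY (subsetUl _ _)) K) (clique_in_max _ _ sY).
case sKY: (K \subset Y) => //=; case nK: (n <= #|K|) => //=.
exact: cover1 (subset_trans sKY sY) nK.
Qed.

Lemma clique_R2 Y K : Y \subset A2 -> clique R Y K = clique S2 Y K.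
Proof.
move=> sY; rewrite (F_cl (subset_trans sY (subsetUr _ _)) K) (clique_in_max _ _ sY).
case sKY: (K \subset Y) => //=; case nK: (n <= #|K|) => //=.
exact: cover2 (subset_trans sKY sY) nK.
Qed.

Lemma sfun_R1 Y : Y \subset A1 -> s_fun S1 Y = sig Y.
Proof.
move=> sY; rewrite -(sfun_R (subset_trans sY (subsetUl _ _))).
by apply: sfun_eq => K; rewrite clique_R1.
Qed.

Lemma sfun_R2 Y : Y \subset A2 -> s_fun S2 Y = sig Y.
Proof.
move=> sY; rewrite -(sfun_R (subset_trans sY (subsetUr _ _))).
by apply: sfun_eq => K; rewrite clique_R2.
Qed.

Lemma P1 Y : #|Y| <= n.-1 -> sig Y = 0.
Proof.
move=> cY; rewrite /sig big1 // => L _; apply/eqP; rewrite /star subn_eq0.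
have := subset_leq_card (subsetIr L Y); lia.
Qed.

Lemma P2 L0 Y : L0 \in F -> Y \subset L0 -> n.-1 <= #|Y| -> sig Y + n.-1 = #|Y|.
Proof.
move=> L0F sY cY; rewrite /sig (bigD1 L0 L0F) /= (setIidPr sY) big1 ?addn0.
  rewrite /star; lia.
move=> L /andP[LF neq]; apply/eqP; rewrite /star subn_eq0.
have h := F_int LF L0F neq.
have : L :&: Y \subset L :&: L0 by rewrite setIS.
move/subset_leq_card; lia.
Qed.

Lemma P3 Y : Y \subset A1 -> n <= #|Y| -> (forall L, L \in F -> ~~ (Y \subset L)) ->
  n + sig Y <= #|Y|.
Proof.
move=> sY nY nL; rewrite leqNgt; apply/negP => h.
have [K [[mK sYK] _]] : exists! K, maxclique S1 A1 K /\ Y \subset K.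
  by apply: geo1 => //; rewrite delta_ltn sfun_R1.
have : [exists L in MC S1 A1, Y \subset L] by apply/exists_inP; exists K; rewrite ?inE.
rewrite -cover1 // => /exists_inP[L LF sYL].
by move: (nL L LF); rewrite sYL.
Qed.

Lemma P3' Y : Y \subset A2 -> n <= #|Y| -> (forall L, L \in F -> ~~ (Y \subset L)) ->
  n + sig Y <= #|Y|.
Proof.
move=> sY nY nL; rewrite leqNgt; apply/negP => h.
have [K [[mK sYK] _]] : exists! K, maxclique S2 A2 K /\ Y \subset K.
  by apply: geo2 => //; rewrite delta_ltn sfun_R2.
have : [exists L in MC S2 A2, Y \subset L] by apply/exists_inP; exists K; rewrite ?inE.
rewrite -cover2 // => /exists_inP[L LF sYL].
by move: (nL L LF); rewrite sYL.
Qed.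

Lemma P4 Y : (Y \subset A1) || (Y \subset A2) -> n <= #|Y| -> n.-1 + sig Y <= #|Y|.
Proof.
move=> sY nY.
case: (boolP [exists L in F, Y \subset L]) => [/exists_inP[L LF sYL]|nex].
  have := P2 LF sYL (leq_trans (leq_pred n) nY); lia.
have nL : forall L, L \in F -> ~~ (Y \subset L).
  by move=> L LF; apply/negP => sYL; move/negP: nex; apply; apply/exists_inP; exists L.
case/orP: sY => sY; [have := P3 sY nY nL | have := P3' sY nY nL]; lia.
Qed.

Lemma F_small L : L \in F -> #|L :&: (A1 :&: A2)| < n.-1 -> (L \subset A1) || (L \subset A2).
Proof.
case/inFP => [K1 K2 m1 m2 le ->|m1 _|m2 _] h; last 2 first.
- by rewrite (maxclique_sub m1).
- by rewrite (maxclique_sub m2) orbT.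
exfalso; have : K1 :&: K2 \subset (K1 :|: K2) :&: (A1 :&: A2).
  apply/subsetP => x; rewrite !inE => /andP[xa xb].
  by rewrite xa (subsetP (maxclique_sub m1)) // (subsetP (maxclique_sub m2)).
move/subset_leq_card => h2; have := leq_trans le h2; rewrite leqNgt h.
by [].
Qed.

Lemma closed_case X : X \subset A1 :|: A2 -> n <= #|X| ->
  (forall L, L \in F -> ~~ (X \subset L)) ->
  (forall L, L \in F -> n.-1 <= #|L :&: X| -> L :&: (A1 :&: A2) \subset X) ->
  n + sig X <= #|X|.
Proof.
move=> sX nX nL cl.
case: (boolP (X \subset A1)) => [sX1|nX1]; first exact: P3.
case: (boolP (X \subset A2)) => [sX2|nX2]; first exact: P3'.
have eU : (X :&: A1) :|: (X :&: A2) = X by rewrite -setIUr (setIidPl sX).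
have eI : (X :&: A1) :&: (X :&: A2) = X :&: (A1 :&: A2) by rewrite setIACA setIid.
have cX : #|X| + #|X :&: (A1 :&: A2)| = #|X :&: A1| + #|X :&: A2|.
  by have := cardsUI (X :&: A1) (X :&: A2); rewrite eU eI.
have s01 : X :&: (A1 :&: A2) \subset X :&: A1 by rewrite setIS // subsetIl.
have s02 : X :&: (A1 :&: A2) \subset X :&: A2 by rewrite setIS // subsetIr.
have subadd : sig X + sig (X :&: (A1 :&: A2)) <= sig (X :&: A1) + sig (X :&: A2).
  rewrite /sig -!big_split; apply: leq_sum => L LF /=.
  apply: arith_sub n_gt0 _ _ _ _.
  - have := cardsUI (L :&: (X :&: A1)) (L :&: (X :&: A2)).
    by rewrite -setIUr eU setIACA setIid eI.
  - by apply: subset_leq_card; rewrite setIS.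
  - by apply: subset_leq_card; rewrite setIS.
  case: (leqP #|L :&: X| n.-1) => h; [by left | right].
  have sLB := cl L LF (ltnW h).
  have e0 : L :&: (X :&: (A1 :&: A2)) = L :&: (A1 :&: A2).
    by rewrite setICA; apply/setIidPr.
  case: (leqP n.-1 #|L :&: (A1 :&: A2)|) => h2; first by left; rewrite e0.
  right; case/orP: (F_small LF h2) => sL; [left | right].
  - by congr #|_|; rewrite setIA (setIidPl (subset_trans (subsetIl L X) sL)).
  - by congr #|_|; rewrite setIA (setIidPl (subset_trans (subsetIl L X) sL)).
have eX1B : (X :&: A1) :&: (A1 :&: A2) = X :&: (A1 :&: A2).
  by apply/setP => x; rewrite !inE; case: (x \in X); case: (x \in A1); case: (x \in A2).
have sB : A1 :&: A2 \subset (X :&: A1) :|: (A1 :&: A2) by exact: subsetUr.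
have sY : (X :&: A1) :|: (A1 :&: A2) \subset A1 by rewrite subUset subsetIr subsetIl.
have H := le_s_nat le1 sB sY.
rewrite !sfun_R1 // in H; last exact: subsetIl.
have conv : sig (X :&: A1) + sig (A1 :&: A2) <=
    sig ((X :&: A1) :|: (A1 :&: A2)) + sig (X :&: (A1 :&: A2)).
  rewrite /sig -!big_split; apply: leq_sum => L LF /=.
  apply: arith_conv.
  - have := cardsUI (L :&: (X :&: A1)) (L :&: (A1 :&: A2)).
    by rewrite -setIUr setIACA setIid eX1B.
  - by apply: subset_leq_card; rewrite setIS.
  - by apply: subset_leq_card; rewrite setIS // subsetIr.
have cY : #|(X :&: A1) :|: (A1 :&: A2)| + #|X :&: (A1 :&: A2)| = #|X :&: A1| + #|A1 :&: A2|.
  by have := cardsUI (X :&: A1) (A1 :&: A2); rewrite eX1B.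
have ha : #|X :&: (A1 :&: A2)| + sig (X :&: A1) <= #|X :&: A1| + sig (X :&: (A1 :&: A2)).
  exact: ar_ha H conv cY.
have lt1 : #|X :&: (A1 :&: A2)| < #|X :&: A1|.
  apply: proper_card; apply/properP; split => //.
  have [q qX qA2] := subsetPn nX2.
  exists q; first by rewrite inE qX /=; move: (subsetP sX q qX); rewrite inE (negbTE qA2) orbF.
  by rewrite !inE (negbTE qA2) !andbF.
have lt2 : #|X :&: (A1 :&: A2)| < #|X :&: A2|.
  apply: proper_card; apply/properP; split => //.
  have [q qX qA1] := subsetPn nX1.
  exists q; first by rewrite inE qX /=; move: (subsetP sX q qX); rewrite inE (negbTE qA1).
  by rewrite !inE (negbTE qA1) !andbF.
have sX1o : (X :&: A1 \subset A1) || (X :&: A1 \subset A2) by rewrite subsetIr.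
case: (leqP n #|X :&: A2|) => c2; last first.
  have z2 := P1 (ltnSE (leq_trans c2 (leqSpred n))).
  have z0 := P1 (leq_trans (subset_leq_card s02) (ltnSE (leq_trans c2 (leqSpred n)))).
  case: (leqP n #|X :&: A1|) => c1.
    exact: arA1 n_gt0 cX subadd lt2 z2 z0 (P4 sX1o c1).
  have z1 := P1 (ltnSE (leq_trans c1 (leqSpred n))).
  exact: arA2 subadd z2 z1 nX.
case: (boolP [exists L in F, X :&: A2 \subset L]) => [/exists_inP[L0 L0F sX2L]|nex]; last first.
  have nL2 : forall L, L \in F -> ~~ (X :&: A2 \subset L).
    by move=> L LF; apply/negP => sL; move/negP: nex; apply; apply/exists_inP; exists L.
  exact: arB cX subadd ha (P3' (subsetIr X A2) c2 nL2).
have e2 := P2 L0F sX2L (leq_trans (leq_pred n) c2).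
case: (leqP n.-1 #|X :&: (A1 :&: A2)|) => c0.
  have e0 := P2 L0F (subset_trans s02 sX2L) c0.
  have nL1 : forall L, L \in F -> ~~ (X :&: A1 \subset L).
    move=> L1 L1F; apply/negP => sX1L1.
    have eL : L1 = L0.
      case: (eqVneq L1 L0) => // neq; have h := F_int L1F L0F neq.
      have : X :&: (A1 :&: A2) \subset L1 :&: L0.
        by rewrite subsetI (subset_trans s01 sX1L1) (subset_trans s02 sX2L).
      move/subset_leq_card => h'; have := leq_trans c0 h'; rewrite leqNgt h //.
    subst L1; move: (nL L0 L0F); rewrite -eU subUset sX1L1 sX2L //.
  have c1 := arC1 n_gt0 c0 lt1.
  exact: arC cX subadd e2 e0 (P3 (subsetIr X A1) c1 nL1).
have z0 := P1 (ltnW c0).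
case: (leqP n #|X :&: A1|) => c1.
  exact: arD1 n_gt0 cX subadd e2 z0 c0 (P4 sX1o c1).
have z1 := P1 (ltnSE (leq_trans c1 (leqSpred n))).
exact: arD2 n_gt0 cX subadd e2 z0 lt1 z1.
Qed.

Lemma main_ind k X : #|(A1 :|: A2) :\: X| <= k -> X \subset A1 :|: A2 -> n <= #|X| ->
  (forall L, L \in F -> ~~ (X \subset L)) -> n + sig X <= #|X|.
Proof.
elim: k X => [|k IH] X ck sX nX nL;
  (case: (boolP [forall L in F, (n.-1 <= #|L :&: X|) ==> (L :&: (A1 :&: A2) \subset X)]) => [cl|ncl]);
  try (apply: closed_case => // L LF cLX; move/forall_inP: cl => cl; exact: (implyP (cl L LF) cLX)).
- move/forall_inPn: ncl => [L LF]; rewrite negb_imply => /andP[cLX /subsetPn[p pLB pX]].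
  have pD : p \in A1 :|: A2 by move: pLB; rewrite !inE => /and3P[_ -> _].
  rewrite leqn0 cards_eq0 in ck; move/eqP: ck => /setP/(_ p).
  by rewrite !inE pX; move: pD; rewrite inE => ->.
- move/forall_inPn: ncl => [L LF]; rewrite negb_imply => /andP[cLX /subsetPn[p pLB pX]].
  have pL : p \in L by move: pLB; rewrite inE => /andP[].
  have pD : p \in A1 :|: A2 by move: pLB; rewrite !inE => /and3P[_ -> _].
  have ck' : #|(A1 :|: A2) :\: (p |: X)| <= k.
    rewrite -ltnS; apply: leq_trans ck; apply: proper_card; apply/properP; split.
      by apply/subsetP => x; rewrite !inE => /andP[/norP[_ ->] ->].
    by exists p; [rewrite inE pX pD | rewrite !inE eqxx].
  have sX' : p |: X \subset A1 :|: A2 by rewrite subUset sub1set pD sX.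
  have nX' : n <= #|p |: X| by apply: (leq_trans nX); apply: subset_leq_card; exact: subsetUr.
  have nL' : forall L', L' \in F -> ~~ (p |: X \subset L').
    move=> L' L'F; apply: contra (nL L' L'F); apply: subset_trans; exact: subsetUr.
  have := IH _ ck' sX' nX' nL'; rewrite cardsU1 pX add1n -addn1 => h.
  apply: (arE h).
  have cL : #|L :&: (p |: X)| = #|L :&: X| + 1.
    rewrite setIUr (setIidPr (_ : [set p] \subset L)) ?sub1set // cardsU1.
    by rewrite inE (negbTE pX) andbF addnC.
  have mono : forall L', L' \in F -> star n (L' :&: X) <= star n (L' :&: (p |: X)).
    move=> L' _; rewrite /star; apply: leq_sub2r; rewrite ltnS; apply: subset_leq_card.
    by rewrite setIS // subsetUr.
  have := sum1 (f := fun L' => star n (L' :&: (p |: X))) (g := fun L' => star n (L' :&: X)) LF mono.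
  by rewrite /= /star cL star_add.
Qed.

Lemma mcRF K : maxclique R (A1 :|: A2) K = (K \in F).
Proof.
rewrite (maxcliqueF n_gt0 F_int (F_cl (subxx _))); apply/exists_inP/idP.
  by case=> L LF /andP[_ /eqP ->]; rewrite (setIidPl (F_sub LF)).
by move=> KF; exists K => //; rewrite (setIidPl (F_sub KF)) (F_card KF) eqxx.
Qed.

Lemma geo_R : geometric R (A1 :|: A2).
Proof.
move=> X sX nX; rewrite delta_ltn (sfun_R sX) => h.
case: (boolP [exists L in F, X \subset L]) => [/exists_inP[L LF sXL]|nex].
  exists L; split; first by rewrite mcRF.
  move=> K' [mK' sXK']; rewrite mcRF in mK'.
  case: (eqVneq L K') => // neq; have h2 := F_int LF mK' neq.
  have : X \subset L :&: K' by rewrite subsetI sXL sXK'.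
  move/subset_leq_card => h1; have := leq_trans nX h1.
  have h3 : n.-1 < n by rewrite ltn_predL.
  by rewrite leqNgt (ltn_trans h2 h3).
have nL : forall L, L \in F -> ~~ (X \subset L).
  by move=> L LF; apply/negP => sL; move/negP: nex; apply; apply/exists_inP; exists L.
have := main_ind (leqnn _) sX nX nL; rewrite leqNgt h //.
Qed.

End Main.


Lemma clok0 (T : finType) (S : pred (0.-tuple T)) K : clok S K = S [tuple].
Proof.
apply/forallP/idP => [/(_ [tuple]) //|H t]; by rewrite tuple0 H implybT.
Qed.

Lemma geo0 (T : finType) (S : pred (0.-tuple T)) A : geometric S A.
Proof.
move=> X sX _; rewrite delta_ltn add0n.
case b: (S [tuple]) => h.
  have cl : forall Y K, clique S Y K = (K \subset Y).
    by move=> Y K; rewrite cliqueE clok0 b; case: (K \subset Y).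
  have mA : maxclique S A A.
    rewrite /maxclique cl subxx /=; apply/negP => /existsP[K' /andP[]].
    by rewrite cl => sK'; rewrite properE sK' andbF.
  exists A; split; first by split.
  move=> K [mK _]; move: mK; rewrite /maxclique cl => /andP[sKA /negP nex].
  apply/eqP; rewrite eq_sym; apply/negPn/negP => neq; apply: nex; apply/existsP; exists A.
  by rewrite cl subxx properEneq neq sKA.
exfalso; move: h; rewrite /s_fun big_pred0 // => K.
by rewrite /maxclique cliqueE clok0 b !andbF.
Qed.

Unset Implicit Arguments.
Theorem mainTheorem1 (n : nat) (T : finType)
    (A1 A2 : {set T}) (S1 S2 : pred (n.-tuple T)) :
  is_structure A1 S1 -> is_structure A2 S2 ->
  geometric S1 A1 -> geometric S2 A2 ->
  (* B = A1 :&: A2 is a common induced substructure *)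
  (forall t : n.-tuple T, all (fun x => x \in A1 :&: A2) t -> S1 t = S2 t) ->
  (* B <= A1 *)
  le_s S1 (A1 :&: A2) A1 ->
  geometric (amalgam A1 S1 A2 S2) (A1 :|: A2).
Proof.
move=> _ _ geo1 geo2 agree le1.
case: (posnP n) => [n0|npos].
  subst n; exact: geo0.
exact: (geo_R npos geo1 geo2 agree le1).
Qed.
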